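(* Let $X$ be a nonempty set, $f:X\to X$ a one-to-one function, $x_0\in X$, $k\in\mathbb{N}$, and $\tau_3$ the fuzzy topology on $X$ defined below. Then $f:(X,\tau_3)\to(X,\tau_3)$ is open if and only if $f$ is onto.
   Context: A fuzzy subset of $X$ is a function $\mu:X\to[0,1]$; union is the pointwise supremum, intersection the pointwise minimum; $\emptyset$ is the constant $0$ and $X$ the constant $1$. A fuzzy topology is a family of fuzzy subsets containing $\emptyset$ and $X$, closed under arbitrary unions and finite intersections; the topology generated by a base $\mathbb{B}$ consists of $\emptyset$ and all unions of subfamilies of $\mathbb{B}$. $\mathbb{N}=\{1,2,\dots\}$. Powers: $f^0=\mathrm{id}_X$, $f^{n+1}=f^n\circ f$ for $n\ge0$; for $n<0$, $f^n(x_0)$ denotes (when it exists) the unique $y$ with $f^{-n}(y)=x_0$ (unique since $f$ is injective). Definition of $\tau_3$: $A(x_0)$ is the set of all points $f^n(x_0)$, $n\in\mathbb{Z}$, that are defined; $N_0=\{n\in\mathbb{Z}: f^n(x_0)\text{ is defined and lies in }A(x_0)\}$. Let $C$ be the fuzzy set with $\mu_C(x)=1$ for $x\in X\setminus A(x_0)$ and $\mu_C(x)=0$ for $x\in A(x_0)$. For $n\in N_0$ let $\mu_{C_n}(x)=1$ if $x=f^n(x_0)$, $\mu_{C_n}(x)=1/k$ if $x\in A(x_0)$ and $x\neq f^n(x_0)$, and $\mu_{C_n}(x)=0$ otherwise. $\tau_3$ is generated by the base $\{C\}\cup\{C_n:n\in N_0\}$. The image of a fuzzy set $A$ is $\mu_{f(A)}(y)=\sup\{\mu_A(x):f(x)=y\}$,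 and $0$ if $y\notin f(X)$; $f$ is open if $f(U)$ is open for every open fuzzy set $U$. *)

(* Defs.v *)
(* fuzzy subsets of X are functions X -> R (values in [0,1]). *)
From Stdlib Require Import Reals ZArith.
Open Scope R_scope.

Definition fuzzy (X : Type) := X -> R.

(* f^n(x0) = y, for n : Z (for n < 0: the unique y with f^(-n)(y) = x0). *)
Definition fpow_is {X : Type} (f : X -> X) (n : Z) (x0 y : X) : Prop :=
  if (0 <=? n)%Z then y = Nat.iter (Z.to_nat n) f x0
  else Nat.iter (Z.to_nat (- n)) f y = x0.

Definition orbitA {X : Type} (f : X -> X) (x0 : X) (x : X) : Prop :=
  exists n : Z, fpow_is f n x0 x.

Definition is_C {X : Type} (f : X -> X) (x0 : X) (U : fuzzy X) : Prop :=
  forall x, (~ orbitA f x0 x -> U x = 1) /\ (orbitA f x0 x -> U x = 0).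

Definition is_Cn {X : Type} (f : X -> X) (x0 : X) (k : nat) (y : X)
  (U : fuzzy X) : Prop :=
  forall x, (x = y -> U x = 1)
         /\ (orbitA f x0 x -> x <> y -> U x = 1 / INR k)
         /\ (~ orbitA f x0 x -> U x = 0).

Definition base3 {X : Type} (f : X -> X) (x0 : X) (k : nat) (U : fuzzy X) : Prop :=
  is_C f x0 U \/
  exists (n : Z) (y : X), fpow_is f n x0 y /\ orbitA f x0 y /\ is_Cn f x0 k y U.

(* U is the union (pointwise supremum) of the family F; the empty union is
   the constant 0 (adding 0 to the set does not change the sup of a nonempty
   family of [0,1]-valued fuzzy sets). *)
Definition fuzzy_union {X : Type} (F : fuzzy X -> Prop) (U : fuzzy X) : Prop :=
  forall x, is_lub (fun r => r = 0 \/ exists V, F V /\ r = V x) (U x).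

Definition tau3_open {X : Type} (f : X -> X) (x0 : X) (k : nat) (U : fuzzy X) : Prop :=
  (forall x, U x = 0) \/
  exists F : fuzzy X -> Prop, (forall V, F V -> base3 f x0 k V) /\ fuzzy_union F U.

Definition fuzzy_image {X : Type} (f : X -> X) (A B : fuzzy X) : Prop :=
  forall y, is_lub (fun r => r = 0 \/ exists x, f x = y /\ r = A x) (B y).

Definition tau3_open_map {X : Type} (f : X -> X) (x0 : X) (k : nat) : Prop :=
  forall U B, tau3_open f x0 k U -> fuzzy_image f U B -> tau3_open f x0 k B.

(* Main.v *)
Require Import Defs.
From Stdlib Require Import Reals ZArith.
From Stdlib Require Import Lia Lra ClassicalDescription Classical ClassicalEpsilon.
Open Scope R_scope.

Section S.
Context {X : Type} (f : X -> X) (x0 : X) (k : nat).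
Hypothesis hinj : forall a b : X, f a = f b -> a = b.

Lemma iter_inj : forall b u v, Nat.iter b f u = Nat.iter b f v -> u = v.
Proof. induction b; simpl; intros u v H; auto. Qed.

Lemma orbit_iff y : orbitA f x0 y <-> exists a b, Nat.iter b f y = Nat.iter a f x0.
Proof.
  split.
  - intros [n Hn]; unfold fpow_is in Hn. destruct (0 <=? n)%Z.
    + exists (Z.to_nat n), 0%nat. simpl. auto.
    + exists 0%nat, (Z.to_nat (-n)). simpl. auto.
  - intros [a [b H]]. destruct (le_lt_dec b a) as [Hl|Hl].
    + replace a with (b + (a - b))%nat in H by lia.
      rewrite Nat.iter_add in H. apply iter_inj in H.
      exists (Z.of_nat (a - b)). unfold fpow_is.
      replace (0 <=? Z.of_nat (a - b))%Z with true by (symmetry; apply Z.leb_le; lia).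
      rewrite Nat2Z.id. auto.
    + replace b with (a + (b - a))%nat in H by lia.
      rewrite Nat.iter_add in H. apply iter_inj in H.
      exists (- Z.of_nat (b - a))%Z. unfold fpow_is.
      replace (0 <=? - Z.of_nat (b - a))%Z with false by (symmetry; apply Z.leb_gt; lia).
      rewrite Z.opp_involutive, Nat2Z.id. auto.
Qed.

Lemma orbit_f x : orbitA f x0 x -> orbitA f x0 (f x).
Proof.
  rewrite !orbit_iff. intros [a [b H]]. exists (S a), b.
  simpl. rewrite <- H. rewrite <- Nat.iter_succ_r. simpl. reflexivity.
Qed.

Lemma orbit_finv x : orbitA f x0 (f x) -> orbitA f x0 x.
Proof.
  rewrite !orbit_iff. intros [a [b H]]. exists a, (S b).
  rewrite <- H. rewrite Nat.iter_succ_r. reflexivity.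
Qed.

Lemma orbit_x0 : orbitA f x0 x0.
Proof. exists 0%Z. unfold fpow_is. simpl. reflexivity. Qed.

End S.

Lemma is_lub_ext (P Q : R -> Prop) m :
  (forall r, P r <-> Q r) -> is_lub P m -> is_lub Q m.
Proof.
  intros H [H1 H2]. split.
  - intros r Hr. apply H1, H, Hr.
  - intros b Hb. apply H2. intros r Hr. apply Hb, H, Hr.
Qed.

Theorem theorem2p13 (X : Type) (f : X -> X) (x0 : X) (k : nat)
  (hk : (1 <= k)%nat) (hinj : forall a b : X, f a = f b -> a = b) :
  tau3_open_map f x0 k <-> (forall y : X, exists x : X, f x = y).
Proof.
  assert (Hk1 : 1 <= INR k) by (replace 1 with (INR 1) by reflexivity; apply le_INR; lia).
  assert (Hkp : 0 < 1 / INR k) by (apply Rdiv_lt_0_compat; lra).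
  assert (Hkl : 1 / INR k <= 1).
  { unfold Rdiv; rewrite Rmult_1_l. pose proof (Rinv_le_contravar 1 (INR k) ltac:(lra) Hk1) as HH; rewrite Rinv_1 in HH; exact HH. }
  assert (Hbase_le : forall V x, base3 f x0 k V -> V x <= 1).
  { intros V x [HC|[n [y [_ [_ HV]]]]].
    - destruct (HC x) as [H1 H2]. destruct (classic (orbitA f x0 x)).
      + rewrite H2; auto; lra.
      + rewrite H1; auto; lra.
    - destruct (HV x) as [H1 [H2 H3]]. destruct (classic (x = y)).
      + rewrite H1; auto; lra.
      + destruct (classic (orbitA f x0 x)).
        * rewrite H2; auto.
        * rewrite H3; auto; lra. }
  split.
  - intros Hopen. apply NNPP. intros Hns. apply not_all_ex_not in Hns.
    destruct Hns as [y Hy].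
    set (U1 := fun _ : X => 1).
    set (B := fun z => if excluded_middle_informative (exists x, f x = z) then 1 else 0).
    assert (HU1 : tau3_open f x0 k U1).
    { right. exists (base3 f x0 k). split; auto. intros x. split.
      - intros r [Hr|[V [HV Hr]]]; subst r; unfold U1; [lra|]. apply Hbase_le; auto.
      - intros b Hb. unfold U1. apply Hb. right.
        destruct (classic (orbitA f x0 x)) as [Hx|Hx].
        + exists (fun z => if excluded_middle_informative (z = x) then 1 else
                   if excluded_middle_informative (orbitA f x0 z) then 1 / INR k else 0).
          split.
          * right. destruct Hx as [n Hn]. exists n, x. split; auto. split; [exists n; auto|].
            intros z. split; [|split].
            -- intros ->. destruct (excluded_middle_informative (x = x)); tauto.
            -- intros Hz Hzx. destruct (excluded_middle_informative (z = x)); [tauto|].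
               destruct (excluded_middle_informative (orbitA f x0 z)); tauto.
            -- intros Hz. destruct (excluded_middle_informative (z = x)) as [->|].
               ++ exfalso; apply Hz; exists n; auto.
               ++ destruct (excluded_middle_informative (orbitA f x0 z)); tauto.
          * destruct (excluded_middle_informative (x = x)); tauto.
        + exists (fun z => if excluded_middle_informative (orbitA f x0 z) then 0 else 1).
          split.
          * left. intros z. split; intros Hz;
            destruct (excluded_middle_informative (orbitA f x0 z)); tauto.
          * destruct (excluded_middle_informative (orbitA f x0 x)); tauto. }
    assert (HB : fuzzy_image f U1 B).
    { intros z. unfold B. destruct (excluded_middle_informative (exists x, f x = z)) as [Hz|Hz].
      - split.
        + intros r [Hr|[x [_ Hr]]]; subst r; unfold U1; lra.
        + intros b Hb. apply Hb. right. destruct Hz as [x Hx]. exists x. split; auto.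
      - split.
        + intros r [Hr|[x [Hx Hr]]]; [lra|]. exfalso; apply Hz; exists x; auto.
        + intros b Hb. apply Hb. left; auto. }
    specialize (Hopen U1 B HU1 HB).
    assert (HBy : B y = 0).
    { unfold B. destruct (excluded_middle_informative (exists x, f x = y)); tauto. }
    assert (HBf : forall x, B (f x) = 1).
    { intros x. unfold B. destruct (excluded_middle_informative (exists x', f x' = f x)) as [|n];
      auto. exfalso; apply n; exists x; auto. }
    destruct Hopen as [H0|[F [HF Hlub]]].
    + specialize (H0 (f x0)). rewrite HBf in H0. lra.
    + assert (Hpos : forall w, B w = 1 -> exists V, F V /\ 0 < V w).
      { intros w Hw. apply NNPP. intros Hn.
        destruct (Hlub w) as [_ H2].
        assert (B w <= 0); [|lra].
        apply H2. intros r [Hr|[V [HV Hr]]]; [lra|]. subst r.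
        apply Rnot_lt_le. intros Hlt. apply Hn. exists V; auto. }
      assert (Hley : forall V, F V -> V y <= 0).
      { intros V HV. rewrite <- HBy. apply (proj1 (Hlub y)). right. exists V; auto. }
      destruct (classic (orbitA f x0 y)) as [Hoy|Hoy].
      * destruct (Hpos (f x0) (HBf x0)) as [V [HV Hv]].
        specialize (Hley V HV).
        destruct (HF V HV) as [HC|[n [z [_ [_ HCn]]]]].
        -- destruct (HC (f x0)) as [_ H2]. rewrite H2 in Hv; [lra|].
           apply (orbit_f f x0 hinj). exact (orbit_x0 f x0).
        -- destruct (HCn y) as [H1 [H2 _]]. destruct (classic (y = z)).
           ++ rewrite H1 in Hley; auto; lra.
           ++ rewrite H2 in Hley; auto; lra.
      * destruct (Hpos (f y) (HBf y)) as [V [HV Hv]].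
        specialize (Hley V HV).
        destruct (HF V HV) as [HC|[n [z [_ [_ HCn]]]]].
        -- destruct (HC y) as [H1 _]. rewrite H1 in Hley; auto; lra.
        -- destruct (HCn (f y)) as [_ [_ H3]]. rewrite H3 in Hv; [lra|].
           intros Ho. apply Hoy. eapply orbit_finv; eauto.
  - intros Hsurj.
    set (g := fun y => proj1_sig (constructive_indefinite_description _ (Hsurj y))).
    assert (Hfg : forall y, f (g y) = y).
    { intros y. unfold g. destruct (constructive_indefinite_description _ (Hsurj y)); auto. }
    assert (Hgf : forall x, g (f x) = x) by (intros x; apply hinj; rewrite Hfg; auto).
    assert (Hog : forall y, orbitA f x0 (g y) <-> orbitA f x0 y).
    { intros y. split; intros H.
      - rewrite <- (Hfg y). apply (orbit_f f x0 hinj); auto.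
      - apply (orbit_finv f x0 hinj). rewrite Hfg; auto. }
    intros U B HU HB.
    assert (Unn : forall x, 0 <= U x).
    { intros x. destruct HU as [H0|[F [_ Hl]]].
      - rewrite H0; lra.
      - apply (proj1 (Hl x)). left; auto. }
    assert (HBU : forall y, B y = U (g y)).
    { intros y. apply (is_lub_u _ _ _ (HB y)). split.
      - intros r [Hr|[x [Hx Hr]]]; subst r.
        + apply Unn.
        + rewrite <- (Hgf x). rewrite Hx. lra.
      - intros b Hb. apply Hb. right. exists (g y). auto. }
    destruct HU as [H0|[F [HF Hl]]].
    + left. intros y. rewrite HBU. apply H0.
    + right. exists (fun V' => exists V, F V /\ forall x, V' x = V (g x)). split.
      * intros V' [V [HV HV']]. destruct (HF V HV) as [HC|[n [y [_ [Hoy HCn]]]]].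
        -- left. intros x. rewrite HV'. destruct (HC (g x)) as [H1 H2].
           rewrite <- (Hog x). auto.
        -- right. destruct (orbit_f f x0 hinj y Hoy) as [m Hm].
           exists m, (f y). split; auto. split; [exists m; auto|].
           intros x. rewrite HV'. destruct (HCn (g x)) as [H1 [H2 H3]].
           split; [|split].
           ++ intros ->. apply H1. auto.
           ++ intros Ho Hne. apply H2. apply Hog; auto.
              intros Heq. apply Hne. rewrite <- Heq. auto.
           ++ intros Ho. apply H3. rewrite Hog; auto.
      * intros x. rewrite HBU. eapply is_lub_ext; [|apply (Hl (g x))].
        intros r. split.
        -- intros [Hr|[V [HV Hr]]]; [left; auto|]. right.
           exists (fun z => V (g z)). split; auto. exists V. split; auto.
        -- intros [Hr|[V' [[V [HV HV']] Hr]]]; [left; auto|]. right.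
           exists V. split; auto. rewrite Hr. auto.
Qed.
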